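(* Let $\ell>0$, $\varepsilon>0$ and $v_->0$, $u_\pm>0$ be given, and set $v_*:=v_-$. Let $P\in C^2(\mathbb{R}^+)$ and $\nu\in C^1(\mathbb{R}^+)$ satisfy, for all $u>0$, $$P(0)=0,\quad P(+\infty)=+\infty,\quad P'(u)>0,\quad P''(u)>0,\quad \nu(u)>0.$$ Set $f(u):=u\int_0^u \frac{P(z)}{z^2}\,dz$ and assume $$v_*^2\,(u_+-u_-)=u_-\,u_+\,\big(P(u_+)-P(u_-)\big)\qquad\text{and}\qquad \Big(\frac{v_*^3}{2u_+^2}+v_*f'(u_+)\Big)-\Big(\frac{v_*^3}{2u_-^2}+v_*f'(u_-)\Big)\le 0.$$ Consider the initial-boundary value problem $$u_t+v_x=0,\qquad v_t+\Big\{\frac{v^2}{u}+P(u)-\varepsilon\,\nu(u)\Big(\frac{v}{u}\Big)_x\Big\}_x=0,\qquad x\in(-\ell,\ell),\ t\ge0,$$ with $u(\pm\ell,t)=u_\pm$, $v(-\ell,t)=v_-$ for $t\ge0$ and $u(x,0)=u_0(x)$, $v(x,0)=v_0(x)$. Then there exists a unique stationary solution $(\bar u(x),\bar v(x))$ of this problem, i.e. a unique time-independent solution of the boundary value problem $$v_x=0,\qquad \Big\{\frac{v^2}{u}+P(u)-\varepsilon\,\nu(u)\Big(\frac{v}{u}\Big)_x\Big\}_x=0\ \text{ on }(-\ell,\ell),\qquad u(\pm\ell)=u_\pm,\quad v(-\ell)=v_-.$$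
   Context: Here $u$ is the fluid density and $v$ the momentum (for a compressible isentropic fluid with density-dependent viscosity $\nu$). Since $v_x=0$, the second component of a stationary solution is the constant $v_*=v_-$; the second displayed condition is the entropy jump condition $[\![\frac{v^3}{2u^2}+vf'(u)]\!]\le0$ with $v_+=v_-=v_*$, where $[\![g]\!]$ denotes the value at $(u_+,v_* )$ minus the value at $(u_-,v_* )$. *)

(* Defs.v *)
From Stdlib Require Import Reals Lra.
From Coquelicot Require Import Coquelicot.
Open Scope R_scope.

(* f'(u) for f(u) := u * int_0^u P(z)/z^2 dz, i.e.
   f'(u) = int_0^u P(z)/z^2 dz + P(u)/u.
   The lower limit 0 may make the integral diverge (e.g. when P'(0) > 0);
   only differences f'(u+) - f'(u-) enter the statement, so we use the
   base point 1 instead of 0 (this changes f' by an additive constant only,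
   and agrees with the paper's value of every difference whenever it is
   defined). *)
Definition fprime (P : R -> R) (u : R) : R :=
  RInt (fun z => P z / z ^ 2) 1 u + P u / u.

Definition flux (eps : R) (P nu : R -> R) (u v : R -> R) (x : R) : R :=
  v x ^ 2 / u x + P (u x) - eps * nu (u x) * Derive (fun y => v y / u y) x.

Definition stationary_solution (l eps : R) (P nu : R -> R)
    (um up vm : R) (u v : R -> R) : Prop :=
  (forall x, -l <= x <= l -> 0 < u x) /\
  (forall x, -l <= x <= l ->
     filterlim u (within (fun y => -l <= y <= l) (locally x)) (locally (u x)) /\
     filterlim v (within (fun y => -l <= y <= l) (locally x)) (locally (v x))) /\
  (forall x, -l < x < l ->
     ex_derive u x /\ ex_derive (Derive u) x /\
     is_derive v x 0 /\
     is_derive (flux eps P nu u v) x 0) /\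
  u (-l) = um /\ u l = up /\ v (-l) = vm.

(* Main.v *)
Require Import Defs.
From Stdlib Require Import Reals Lra Ranalysis5 ClassicalEpsilon.
From Coquelicot Require Import Coquelicot.
Open Scope R_scope.


Definition ctn (l : R) (f : R -> R) := forall x, -l <= x <= l -> forall e, 0 < e ->
  exists d, 0 < d /\ forall y, -l <= y <= l -> Rabs (y - x) < d -> Rabs (f y - f x) < e.

Lemma ball_R (x d y : R) : ball x d y <-> Rabs (y - x) < d.
Proof. reflexivity. Qed.

Lemma ctn_of_filterlim l f :
  (forall x, -l <= x <= l -> filterlim f (within (fun y => -l <= y <= l) (locally x)) (locally (f x)))
  -> ctn l f.
Proof.
  intros H x Hx e He.
  destruct (proj1 (filterlim_locally _ _) (H x Hx) (mkposreal e He)) as [d Hd].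
  exists d. split. apply cond_pos. intros y Hy Hyx. apply (Hd y). apply Hyx. apply Hy.
Qed.

Lemma filterlim_of_ctn l f : ctn l f ->
  (forall x, -l <= x <= l -> filterlim f (within (fun y => -l <= y <= l) (locally x)) (locally (f x))).
Proof.
  intros H x Hx. apply filterlim_locally. intros [e He].
  destruct (H x Hx e He) as [d [Hd Hd']].
  exists (mkposreal d Hd). intros y Hy Hy'. apply (Hd' y Hy' Hy).
Qed.

Lemma deriv_cont (f : R -> R) (x d : R) : is_derive f x d -> continuity_pt f x.
Proof.
  intros H. apply continuity_pt_filterlim.
  apply (ex_derive_continuous (K:=R_AbsRing) (V:=R_NormedModule)). exists d; exact H.
Qed.

Lemma mvt_int (f df : R -> R) p q x y : (forall t, p < t < q -> is_derive f t (df t)) -> p < x -> x < y -> y < q ->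
  exists c, x <= c <= y /\ f y - f x = df c * (y - x).
Proof.
  intros H Hx Hxy Hy.
  destruct (MVT_gen f x y df) as [c [Hc Hc']].
  - intros t Ht. apply H. rewrite Rmin_left in Ht by lra. rewrite Rmax_right in Ht by lra. lra.
  - intros t Ht. rewrite Rmin_left in Ht by lra. rewrite Rmax_right in Ht by lra.
    apply (deriv_cont _ _ (df t)). apply H. lra.
  - rewrite Rmin_left in Hc by lra. rewrite Rmax_right in Hc by lra. exists c. split; auto.
Qed.

Lemma incr_int (f df : R -> R) p q x y : (forall t, p < t < q -> is_derive f t (df t)) ->
  (forall t, p < t < q -> 0 < df t) -> p < x -> x < y -> y < q -> f x < f y.
Proof.
  intros H H0 Hx Hxy Hy. destruct (mvt_int f df p q x y H Hx Hxy Hy) as [c [Hc E]].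
  assert (0 < df c) by (apply H0; lra). assert (0 < df c * (y - x)) by (apply Rmult_lt_0_compat; lra). lra.
Qed.

Lemma nonincr_int (f df : R -> R) p q x y : (forall t, p < t < q -> is_derive f t (df t)) ->
  (forall t, p < t < q -> df t <= 0) -> p < x -> x <= y -> y < q -> f y <= f x.
Proof.
  intros H H0 Hx Hxy Hy. destruct (Req_dec x y) as [->|Hne]. lra.
  destruct (mvt_int f df p q x y H Hx ltac:(lra) Hy) as [c [Hc E]].
  assert (df c <= 0) by (apply H0; lra).
  assert (df c * (y - x) <= 0). { apply Rmult_le_0_r; lra. } lra.
Qed.

Lemma const_int (f df : R -> R) p q x y : (forall t, p < t < q -> is_derive f t (df t)) ->
  (forall t, p < t < q -> df t = 0) -> p < x -> x <= y -> y < q -> f y = f x.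
Proof.
  intros H H0 Hx Hxy Hy. destruct (Req_dec x y) as [->|Hne]. lra.
  destruct (mvt_int f df p q x y H Hx ltac:(lra) Hy) as [c [Hc E]].
  rewrite H0 in E by lra. lra.
Qed.

Lemma ctn_left l f x : ctn l f -> -l < x < l -> (forall y, -l < y < x -> f y <= f x) -> f (-l) <= f x.
Proof.
  intros Hc Hx H. destruct (Rle_dec (f (-l)) (f x)) as [h|h]. exact h. exfalso.
  destruct (Hc (-l) ltac:(lra) (f (-l) - f x) ltac:(lra)) as [d [Hd Hd']].
  set (y := -l + Rmin d (x + l) / 2).
  assert (Hm1 : Rmin d (x + l) <= d) by apply Rmin_l.
  assert (Hm2 : Rmin d (x + l) <= x + l) by apply Rmin_r.
  assert (Hm3 : 0 < Rmin d (x + l)) by (apply Rmin_glb_lt; lra).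
  specialize (Hd' y ltac:(unfold y; lra)). rewrite Rabs_right in Hd' by (unfold y; lra).
  specialize (Hd' ltac:(unfold y; lra)).
  specialize (H y ltac:(unfold y; lra)).
  apply Rabs_def2 in Hd'. lra.
Qed.

Lemma ctn_right l f x : ctn l f -> -l < x < l -> (forall y, x < y < l -> f x <= f y) -> f x <= f l.
Proof.
  intros Hc Hx H. destruct (Rle_dec (f x) (f l)) as [h|h]. exact h. exfalso.
  destruct (Hc l ltac:(lra) (f x - f l) ltac:(lra)) as [d [Hd Hd']].
  set (y := l - Rmin d (l - x) / 2).
  assert (Hm1 : Rmin d (l - x) <= d) by apply Rmin_l.
  assert (Hm2 : Rmin d (l - x) <= l - x) by apply Rmin_r.
  assert (Hm3 : 0 < Rmin d (l - x)) by (apply Rmin_glb_lt; lra).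
  specialize (Hd' y ltac:(unfold y; lra)). rewrite Rabs_left in Hd' by (unfold y; lra).
  specialize (Hd' ltac:(unfold y; lra)).
  specialize (H y ltac:(unfold y; lra)).
  apply Rabs_def2 in Hd'. lra.
Qed.

Lemma ctn_refl l u : ctn l u -> ctn l (fun t => u (- t)).
Proof.
  intros H x Hx e He. destruct (H (-x) ltac:(lra) e He) as [d [Hd Hd']].
  exists d. split; auto. intros y Hy Hyx. apply Hd'. lra.
  replace (-y - -x) with (-(y - x)) by ring. rewrite Rabs_Ropp. auto.
Qed.

Lemma deriv_refl (u : R -> R) x d : is_derive u (-x) d -> is_derive (fun t => u (- t)) x (- d).
Proof.
  intros H.
  assert (H1 : is_derive (fun t : R => - t) x (-1)).
  { auto_derive; auto; ring. }
  pose proof (is_derive_comp u (fun t => -t) x d (-1) H H1) as H2.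
  replace (- d) with (scal (-1) d). exact H2. unfold scal; simpl; unfold mult; simpl; ring.
Qed.

Lemma exp_deriv L t : is_derive (fun t => exp (-2 * L * t)) t (-2 * L * exp (-2 * L * t)).
Proof. auto_derive; auto; ring. Qed.

Lemma gron_fwd (F : R -> R) (w L dl l : R) (u : R -> R) (x0 x1 : R) :
  0 < dl -> 0 <= L -> (forall y, Rabs (y - w) < dl -> Rabs (F y) <= L * Rabs (y - w)) ->
  ctn l u -> (forall x, -l < x < l -> is_derive u x (F (u x))) ->
  -l <= x0 -> x0 < x1 -> x1 <= l -> u x0 = w -> u x1 = w.
Proof.
  intros Hdl HL HF Hc Hd H0 H01 H1 Hw.
  destruct (Req_dec (u x1) w) as [E|Hne]; [exact E|exfalso].
  set (E := fun x => x0 <= x <= x1 /\ u x = w).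
  destruct (completeness E) as [x2 [Hub Hlub]].
  { exists x1. intros y [Hy _]. lra. }
  { exists x0. split; [lra|exact Hw]. }
  assert (Hx02 : x0 <= x2) by (apply Hub; split; [lra|exact Hw]).
  assert (Hx21 : x2 <= x1) by (apply Hlub; intros y [Hy _]; lra).
  assert (Hu2 : u x2 = w).
  { destruct (Req_dec (u x2) w) as [h|h]; [exact h|exfalso].
    assert (Hpos : 0 < Rabs (u x2 - w)) by (apply Rabs_pos_lt; lra).
    destruct (Hc x2 ltac:(lra) _ Hpos) as [d [Hd0 Hd']].
    destruct (classic (exists y, E y /\ x2 - d < y)) as [[y [[Hy1 Hy2] Hy3]] | Hn].
    - assert (y <= x2) by (apply Hub; split; auto).
      specialize (Hd' y ltac:(lra)). rewrite Rabs_left1 in Hd' by lra.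
      specialize (Hd' ltac:(lra)). rewrite Hy2 in Hd'.
      replace (w - u x2) with (- (u x2 - w)) in Hd' by ring. rewrite Rabs_Ropp in Hd'. lra.
    - assert (x2 <= x2 - d). { apply Hlub. intros y Hy. destruct (Rle_dec y (x2 - d)) as [h'|h']; auto.
        exfalso. apply Hn. exists y. split; auto. lra. }
      lra. }
  assert (Hx21' : x2 < x1). { destruct (Req_dec x2 x1) as [h|h]; [|lra]. subst. congruence. }
  destruct (Hc x2 ltac:(lra) dl Hdl) as [d [Hd0 Hd']].
  set (x3 := Rmin (x2 + d / 2) ((x2 + x1) / 2)).
  assert (Hx3a : x3 <= x2 + d / 2) by apply Rmin_l.
  assert (Hx3b : x3 <= (x2 + x1) / 2) by apply Rmin_r.
  assert (Hx3c : x2 < x3) by (apply Rmin_glb_lt; lra).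
  set (z := fun t => (u t - w) ^ 2 * exp (-2 * L * t)).
  set (q := Rmin (x2 + d) x1).
  assert (Hq1 : q <= x2 + d) by apply Rmin_l.
  assert (Hq2 : q <= x1) by apply Rmin_r.
  assert (Hq3 : x3 < q) by (apply Rmin_glb_lt; lra).
  set (dz := fun t => (2 * (u t - w) * F (u t)) * exp (-2 * L * t) + (u t - w) ^ 2 * (-2 * L * exp (-2 * L * t))).
  assert (Hdz : forall t, x2 < t < q -> is_derive z t (dz t)).
  { intros t Ht. unfold z, dz.
    apply (is_derive_mult (K:=R_AbsRing) (fun t => (u t - w) ^ 2) (fun t => exp (-2 * L * t))).
    - assert (Hu : is_derive (fun t => u t - w) t (F (u t))).
      { apply (is_derive_ext (fun t => minus (u t) w)). reflexivity.
        replace (F (u t)) with (minus (F (u t)) 0) by (unfold minus, plus, opp; simpl; ring).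
        apply (is_derive_minus (K:=R_AbsRing) (V:=R_NormedModule) u (fun _ => w)).
        apply Hd. lra. apply (is_derive_const (K:=R_AbsRing) (V:=R_NormedModule)). }
      pose proof (is_derive_pow (fun t => u t - w) 2 t _ Hu) as Hp.
      simpl in Hp. replace (2 * (u t - w) * F (u t)) with (INR 2 * F (u t) * (u t - w) ^ 1).
      exact Hp. simpl. ring.
    - apply exp_deriv.
    - intros; simpl; unfold mult; simpl; ring. }
  assert (Hdz0 : forall t, x2 < t < q -> dz t <= 0).
  { intros t Ht. unfold dz.
    assert (Ha : Rabs (u t - w) < dl).
    { rewrite <- Hu2. apply Hd'. lra. rewrite Rabs_right; lra. }
    specialize (HF _ Ha).
    assert (H2 : (u t - w) * F (u t) <= L * (u t - w) ^ 2).
    { apply Rle_trans with (Rabs ((u t - w) * F (u t))). apply Rle_abs.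
      rewrite Rabs_mult. replace ((u t - w) ^ 2) with (Rabs (u t - w) * Rabs (u t - w)).
      rewrite (Rmult_comm L), Rmult_assoc. apply Rmult_le_compat_l. apply Rabs_pos. lra.
      rewrite <- Rabs_mult. rewrite Rabs_right. ring. apply Rle_ge, Rle_0_sqr. }
    pose proof (exp_pos (-2 * L * t)). nra. }
  assert (Hz3 : 0 < z x3).
  { unfold z. apply Rmult_lt_0_compat; [|apply exp_pos].
    assert (u x3 <> w). { intro h. assert (x3 <= x2) by (apply Hub; split; [lra|exact h]). lra. }
    assert (u x3 - w <> 0) by lra. simpl. rewrite Rmult_1_r. nra. }
  set (E2 := exp (-2 * L * x2)).
  assert (HE2 : 0 < E2) by apply exp_pos.
  set (eta := z x3 / E2).
  assert (Heta : 0 < eta) by (apply Rdiv_lt_0_compat; auto).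
  assert (He' : 0 < Rmin 1 eta) by (apply Rmin_glb_lt; lra).
  destruct (Hc x2 ltac:(lra) _ He') as [d' [Hd'0 Hd'']].
  set (s := x2 + Rmin d' (x3 - x2) / 2).
  assert (Hm1 : Rmin d' (x3 - x2) <= d') by apply Rmin_l.
  assert (Hm2 : Rmin d' (x3 - x2) <= x3 - x2) by apply Rmin_r.
  assert (Hm3 : 0 < Rmin d' (x3 - x2)) by (apply Rmin_glb_lt; lra).
  assert (Hs : x2 < s < x3) by (unfold s; lra).
  assert (Hzs : z x3 <= z s) by (apply (nonincr_int z dz x2 q s x3); auto; lra).
  specialize (Hd'' s ltac:(lra)). rewrite Rabs_right in Hd'' by lra. specialize (Hd'' ltac:(unfold s; lra)).
  rewrite Hu2 in Hd''.
  assert (Hr1 : Rmin 1 eta <= 1) by apply Rmin_l.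
  assert (Hr2 : Rmin 1 eta <= eta) by apply Rmin_r.
  assert (Hsq : (u s - w) ^ 2 < eta).
  { replace ((u s - w) ^ 2) with (Rabs (u s - w) * Rabs (u s - w)).
    pose proof (Rabs_pos (u s - w)). nra.
    rewrite <- Rabs_mult. rewrite Rabs_right. ring. apply Rle_ge, Rle_0_sqr. }
  assert (Hexp : exp (-2 * L * s) <= E2).
  { unfold E2. destruct (Req_dec L 0) as [->|hL]. right. f_equal; ring.
    left. apply exp_increasing. nra. }
  assert (z s <= (u s - w)^2 * E2) by (unfold z; apply Rmult_le_compat_l; [apply pow2_ge_0|exact Hexp]).
  apply (Rmult_lt_compat_r E2) in Hsq; auto. unfold eta, Rdiv in Hsq.
  rewrite Rmult_assoc, Rinv_l in Hsq by lra. lra.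
Qed.

Lemma gron (F : R -> R) (w L dl l : R) (u : R -> R) (x0 : R) :
  0 < dl -> 0 <= L -> (forall y, Rabs (y - w) < dl -> Rabs (F y) <= L * Rabs (y - w)) ->
  ctn l u -> (forall x, -l < x < l -> is_derive u x (F (u x))) ->
  -l <= x0 <= l -> u x0 = w -> forall x, -l <= x <= l -> u x = w.
Proof.
  intros Hdl HL HF Hc Hd H0 Hw x Hx.
  destruct (Rtotal_order x0 x) as [h|[h|h]].
  - apply (gron_fwd F w L dl l u x0 x); auto; lra.
  - subst; auto.
  - set (ur := fun t => u (- t)).
    assert (ur (-x) = w).
    { apply (gron_fwd (fun y => - F y) w L dl l ur (-x0) (-x)); auto; try lra.
      - intros y Hy. rewrite Rabs_Ropp. auto.
      - apply ctn_refl; auto.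
      - intros t Ht. unfold ur. apply deriv_refl. apply Hd. lra.
      - unfold ur. rewrite Ropp_involutive. auto. }
    unfold ur in H. rewrite Ropp_involutive in H. auto.
Qed.

Definition sol (l : R) (F : R -> R) (u : R -> R) :=
  (forall x, -l <= x <= l -> 0 < u x) /\ ctn l u /\
  (forall x, -l < x < l -> is_derive u x (F (u x))).

Definition Fc (G N : R -> R) (C : R) := fun w => (C - G w) / N w.

Lemma exd_minus_R (f g : R -> R) x : ex_derive f x -> ex_derive g x -> ex_derive (fun y => f y - g y) x.
Proof. intros. apply (ex_derive_minus (K:=R_AbsRing) (V:=R_NormedModule) f g); auto. Qed.

Lemma exd_cont (f : R -> R) x : ex_derive f x -> continuity_pt f x.
Proof. intros [d H]. apply (deriv_cont f x d H). Qed.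

Lemma lip_zero (F : R -> R) w : ex_derive F w -> F w = 0 ->
  exists L dl, 0 < dl /\ 0 <= L /\ forall y, Rabs (y - w) < dl -> Rabs (F y) <= L * Rabs (y - w).
Proof.
  intros [d Hd] H0. apply is_derive_Reals in Hd.
  destruct (Hd 1 Rlt_0_1) as [del Hdel].
  exists (Rabs d + 1), del. split; [apply cond_pos|split; [pose proof (Rabs_pos d); lra|]].
  intros y Hy. destruct (Req_dec (y - w) 0) as [h|h].
  - replace y with w by lra. rewrite H0, Rabs_R0. apply Rmult_le_pos. pose proof (Rabs_pos d); lra. apply Rabs_pos.
  - specialize (Hdel (y - w) h Hy). replace (w + (y - w)) with y in Hdel by ring. rewrite H0 in Hdel.
    replace (F y) with (((F y - 0) / (y - w) - d) * (y - w) + d * (y - w)) by (field; auto).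
    eapply Rle_trans. apply Rabs_triang. rewrite !Rabs_mult.
    pose proof (Rabs_pos (y - w)). pose proof (Rabs_pos d). nra.
Qed.

Section Core.
Variables (G N : R -> R).
Hypothesis hG : forall w, 0 < w -> ex_derive G w.
Hypothesis hN : forall w, 0 < w -> ex_derive N w.
Hypothesis hNp : forall w, 0 < w -> 0 < N w.

Lemma Fc_exd C w : 0 < w -> ex_derive (Fc G N C) w.
Proof.
  intros Hw. unfold Fc. apply (ex_derive_div (fun w => C - G w) N).
  apply exd_minus_R. apply (ex_derive_const (K:=R_AbsRing) (V:=R_NormedModule)). auto. auto.
  specialize (hNp w Hw). lra.
Qed.

Lemma sol_equil l C u x0 : sol l (Fc G N C) u -> -l <= x0 <= l -> Fc G N C (u x0) = 0 ->
  forall x, -l <= x <= l -> u x = u x0.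
Proof.
  intros [Hp [Hc Hd]] Hx0 H0.
  destruct (lip_zero (Fc G N C) (u x0) (Fc_exd C _ (Hp x0 Hx0)) H0) as [L [dl [Hdl [HL HF]]]].
  apply (gron (Fc G N C) (u x0) L dl l u x0); auto.
Qed.

Lemma pos_keep (g : R -> R) l : 0 < l -> (forall x, -l < x < l -> continuity_pt g x) ->
  (forall x, -l < x < l -> g x <> 0) -> 0 < g 0 -> forall x, -l < x < l -> 0 < g x.
Proof.
  intros Hl Hc Hn H0 x Hx. destruct (Rtotal_order 0 (g x)) as [h|[h|h]]; auto.
  - exfalso. apply (Hn x Hx). auto.
  - exfalso. destruct (Rtotal_order x 0) as [hx|[hx|hx]].
    + destruct (IVT_interv g x 0) as [z [Hz Hz']]; auto.
      intros a Ha. apply Hc. lra. apply (Hn z); auto. lra.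
    + subst. lra.
    + destruct (IVT_interv (fun t => - g t) 0 x) as [z [Hz Hz']]; auto.
      intros a Ha. apply continuity_pt_opp. apply Hc. lra. lra. lra.
      apply (Hn z). lra. lra.
Qed.

Lemma Fu_cont l C u x : sol l (Fc G N C) u -> -l < x < l -> continuity_pt (fun t => Fc G N C (u t)) x.
Proof.
  intros [Hp [Hc Hd]] Hx.
  apply (continuity_pt_comp u (Fc G N C)). apply (deriv_cont u x _ (Hd x Hx)).
  apply exd_cont. apply Fc_exd. apply Hp. lra.
Qed.

Lemma sol_sign l C u : 0 < l -> sol l (Fc G N C) u -> u (-l) <> u l ->
  (forall x, -l < x < l -> 0 < Fc G N C (u x)) \/ (forall x, -l < x < l -> Fc G N C (u x) < 0).
Proof.
  intros Hl Hs Hne.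
  assert (Hnz : forall x, -l < x < l -> Fc G N C (u x) <> 0).
  { intros x Hx H0. apply Hne. rewrite (sol_equil l C u x Hs ltac:(lra) H0 (-l) ltac:(lra)).
    rewrite (sol_equil l C u x Hs ltac:(lra) H0 l ltac:(lra)). auto. }
  destruct (Rtotal_order 0 (Fc G N C (u 0))) as [h|[h|h]].
  - left. apply (pos_keep (fun t => Fc G N C (u t)) l Hl); auto.
    intros; apply (Fu_cont l); auto.
  - exfalso. apply (Hnz 0). lra. auto.
  - right. intros x Hx.
    assert (0 < - Fc G N C (u x)); [|lra].
    apply (pos_keep (fun t => - Fc G N C (u t)) l Hl); auto.
    intros; apply continuity_pt_opp, (Fu_cont l); auto.
    intros y Hy H'. apply (Hnz y Hy). lra. lra.
Qed.


Lemma deriv_opp_R (f : R -> R) x d : is_derive f x d -> is_derive (fun t => - f t) x (- d).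
Proof.
  intros H. apply (is_derive_ext (fun t => (-1) * f t)). intros; simpl; ring.
  replace (- d) with ((-1) * d) by ring. apply is_derive_scal. auto.
Qed.

Lemma ctn_opp l f : ctn l f -> ctn l (fun t => - f t).
Proof.
  intros H x Hx e He. destruct (H x Hx e He) as [d [Hd Hd']]. exists d; split; auto.
  intros y Hy Hyx. replace (- f y - - f x) with (- (f y - f x)) by ring. rewrite Rabs_Ropp. auto.
Qed.

Lemma incr_ends l (f df : R -> R) : ctn l f -> (forall x, -l < x < l -> is_derive f x (df x)) ->
  (forall x, -l < x < l -> 0 < df x) -> forall x, -l < x < l -> f (-l) < f x /\ f x < f l.
Proof.
  intros Hc Hd Hp x Hx.
  assert (Hi : forall y z, -l < y -> y < z -> z < l -> f y < f z).
  { intros y z Hy Hyz Hz. apply (incr_int f df (-l) l y z); auto. }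
  split.
  - set (y := (x - l) / 2). assert (-l < y < x) by (unfold y; lra).
    apply Rle_lt_trans with (f y). apply ctn_left; auto. lra.
    intros z Hz. left. apply Hi; lra. apply Hi; lra.
  - set (y := (x + l) / 2). assert (x < y < l) by (unfold y; lra).
    apply Rlt_le_trans with (f y). apply Hi; lra. apply ctn_right; auto. lra.
    intros z Hz. left. apply Hi; lra.
Qed.

Lemma hit l (u : R -> R) w : 0 < l -> ctn l u -> (forall x, -l < x < l -> continuity_pt u x) ->
  u (-l) < w -> w < u l -> exists x, -l < x < l /\ u x = w.
Proof.
  intros Hl Hc Hcp H1 H2.
  destruct (Hc (-l) ltac:(lra) (w - u (-l)) ltac:(lra)) as [d1 [Hd1 Hd1']].
  destruct (Hc l ltac:(lra) (u l - w) ltac:(lra)) as [d2 [Hd2 Hd2']].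
  assert (Hm1 : Rmin d1 l <= d1) by apply Rmin_l. assert (Hm2 : Rmin d1 l <= l) by apply Rmin_r.
  assert (Hm3 : 0 < Rmin d1 l) by (apply Rmin_glb_lt; lra).
  assert (Hn1 : Rmin d2 l <= d2) by apply Rmin_l. assert (Hn2 : Rmin d2 l <= l) by apply Rmin_r.
  assert (Hn3 : 0 < Rmin d2 l) by (apply Rmin_glb_lt; lra).
  set (y1 := -l + Rmin d1 l / 2). set (y2 := l - Rmin d2 l / 2).
  assert (Hy1 : u y1 < w).
  { specialize (Hd1' y1 ltac:(unfold y1; lra)). rewrite Rabs_right in Hd1' by (unfold y1; lra).
    specialize (Hd1' ltac:(unfold y1; lra)). apply Rabs_def2 in Hd1'. lra. }
  assert (Hy2 : w < u y2).
  { specialize (Hd2' y2 ltac:(unfold y2; lra)). rewrite Rabs_left in Hd2' by (unfold y2; lra).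
    specialize (Hd2' ltac:(unfold y2; lra)). apply Rabs_def2 in Hd2'. lra. }
  destruct (IVT_interv (fun t => u t - w) y1 y2) as [z [Hz Hz']].
  - intros t Ht. apply continuity_pt_minus. apply Hcp. unfold y1, y2 in *; lra. apply continuity_pt_const. intros p q; auto.
  - unfold y1, y2; lra.
  - lra.
  - lra.
  - exists z. split. unfold y1, y2 in *; lra. lra.
Qed.

Lemma C_above l C u a b : 0 < l -> sol l (Fc G N C) u -> u (-l) = a -> u l = b -> a < b ->
  (forall x, -l < x < l -> 0 < Fc G N C (u x)) /\ (forall w, a <= w <= b -> G w < C).
Proof.
  intros Hl Hs Ha Hb Hab. pose proof Hs as [Hp [Hc Hd]].
  assert (Hpos : forall x, -l < x < l -> 0 < Fc G N C (u x)).
  { destruct (sol_sign l C u Hl Hs ltac:(lra)) as [h|h]; auto. exfalso.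
    pose proof (incr_ends l (fun t => - u t) (fun t => - Fc G N C (u t)) (ctn_opp l u Hc)
      ltac:(intros; apply deriv_opp_R; auto) ltac:(intros x Hx; specialize (h x Hx); lra) 0 ltac:(lra)).
    lra. }
  split; auto.
  assert (Hcp : forall x, -l < x < l -> continuity_pt u x) by (intros x Hx; apply (deriv_cont u x _ (Hd x Hx))).
  assert (Hin : forall w, a < w < b -> G w < C).
  { intros w Hw. destruct (hit l u w Hl Hc Hcp ltac:(lra) ltac:(lra)) as [x [Hx Hux]].
    specialize (Hpos x Hx). rewrite Hux in Hpos. unfold Fc in Hpos.
    assert (0 < w) by (rewrite <- Hux; apply Hp; lra).
    specialize (hNp w H). 
    assert (0 < (C - G w) / N w * N w) by (apply Rmult_lt_0_compat; auto).
    field_simplify in H0; lra. }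
  assert (Hpa : 0 < a) by (rewrite <- Ha; apply Hp; lra).
  assert (Hend : forall w, (w = a \/ w = b) -> G w < C).
  { intros w Hw. assert (Hw0 : 0 < w) by (destruct Hw; subst; lra).
    pose proof (exd_cont G w (hG w Hw0)) as Hgc.
    destruct (Rtotal_order (G w) C) as [h|[h|h]]; auto; exfalso.
    -
      assert (Hx0 : exists x0, -l <= x0 <= l /\ u x0 = w).
      { destruct Hw; [exists (-l)|exists l]; split; try lra; congruence. }
      destruct Hx0 as [x0 [Hx0 Hux0]].
      assert (Fc G N C (u x0) = 0) by (unfold Fc; rewrite Hux0, h; unfold Rdiv; ring).
      pose proof (sol_equil l C u x0 Hs Hx0 H (-l) ltac:(lra)).
      pose proof (sol_equil l C u x0 Hs Hx0 H l ltac:(lra)). lra.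
    - pose proof (proj1 (continuity_pt_locally G w) Hgc) as Hgc2; clear Hgc; rename Hgc2 into Hgc.
      destruct (Hgc (mkposreal (G w - C) ltac:(lra))) as [d Hd'].
      assert (Hm1 : Rmin d (b - a) <= d) by apply Rmin_l. assert (Hm2 : Rmin d (b - a) <= b - a) by apply Rmin_r.
      assert (Hm3 : 0 < Rmin d (b - a)) by (apply Rmin_glb_lt; [apply cond_pos|lra]).
      set (w' := if Req_EM_T w a then a + Rmin d (b - a) / 2 else b - Rmin d (b - a) / 2).
      assert (Hw' : a < w' < b /\ Rabs (w' - w) < d).
      { unfold w'. destruct (Req_EM_T w a) as [e|e].
        - subst. rewrite Rabs_right; lra.
        - destruct Hw as [Hw|Hw]; [congruence|]. subst. rewrite Rabs_left; lra. }
      specialize (Hd' w' (proj2 Hw')). simpl in Hd'. specialize (Hin w' (proj1 Hw')).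
      apply Rabs_def2 in Hd'. lra. }
  intros w Hw. destruct (Req_dec w a) as [e|e]. apply Hend; auto.
  destruct (Req_dec w b) as [e'|e']. apply Hend; auto. apply Hin. lra.
Qed.


Definition kf C := fun w => N w / (C - G w).
Definition Hh a C := fun w => RInt (kf C) a w.
Definition adm a b C := forall w, a <= w <= b -> G w < C.

Lemma kf_exd C w : 0 < w -> G w < C -> ex_derive (kf C) w.
Proof.
  intros Hw HC. unfold kf. apply (ex_derive_div N (fun w => C - G w)). auto.
  apply exd_minus_R. apply (ex_derive_const (K:=R_AbsRing) (V:=R_NormedModule)). auto. lra.
Qed.

Lemma kf_cont C w : 0 < w -> G w < C -> continuous (kf C) w.
Proof.
  intros Hw HC. apply (ex_derive_continuous (K:=R_AbsRing) (V:=R_NormedModule)). apply kf_exd; auto.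
Qed.

Lemma kf_pos C w : 0 < w -> G w < C -> 0 < kf C w.
Proof. intros Hw HC. unfold kf. apply Rdiv_lt_0_compat; auto. lra. Qed.

Lemma kf_ex a b C p q : 0 < a -> adm a b C -> a <= p <= b -> a <= q <= b -> ex_RInt (kf C) p q.
Proof.
  intros Ha Hadm Hp Hq. apply (ex_RInt_continuous (V:=R_CompleteNormedModule)). intros z Hz.
  assert (a <= Rmin p q) by (apply Rmin_glb; lra).
  assert (Rmax p q <= b) by (apply Rmax_lub; lra).
  apply kf_cont. lra. apply Hadm. lra.
Qed.

Lemma kf_bound a b C : 0 < a -> a <= b -> adm a b C -> exists Km, 0 < Km /\ forall w, a <= w <= b -> kf C w <= Km.
Proof.
  intros Ha Hab Hadm. destruct (continuity_ab_maj (kf C) a b Hab) as [m [Hm Hm']].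
  { intros c Hc. apply continuity_pt_filterlim. apply kf_cont. lra. apply Hadm; lra. }
  exists (kf C m). split. apply kf_pos. lra. apply Hadm; lra. auto.
Qed.

Lemma Hh_diff a b C p q : 0 < a -> adm a b C -> a <= p <= b -> a <= q <= b ->
  Hh a C q - Hh a C p = RInt (kf C) p q.
Proof.
  intros Ha Hadm Hp Hq. unfold Hh.
  rewrite <- (RInt_Chasles (kf C) a p q).
  simpl. unfold plus; simpl. ring.
  apply (kf_ex a b); auto; lra. apply (kf_ex a b); auto; lra.
Qed.

Lemma Hh_lip a b C Km p q : 0 < a -> adm a b C -> (forall w, a <= w <= b -> kf C w <= Km) ->
  a <= p <= b -> a <= q <= b -> Rabs (Hh a C q - Hh a C p) <= Km * Rabs (q - p).
Proof.
  intros Ha Hadm HK Hp Hq.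
  assert (Hgen : forall p q, a <= p <= b -> a <= q <= b -> p <= q -> Rabs (Hh a C q - Hh a C p) <= Km * Rabs (q - p)).
  { clear p q Hp Hq. intros p q Hp Hq Hpq. rewrite (Hh_diff a b C p q) by auto.
    rewrite (Rabs_right (q - p)) by lra. rewrite Rmult_comm. apply abs_RInt_le_const; auto.
    apply (kf_ex a b); auto.
    intros t Ht. rewrite Rabs_right. apply HK; lra. left. apply kf_pos. lra. apply Hadm; lra. }
  destruct (Rle_dec p q). apply Hgen; auto.
  rewrite <- Rabs_Ropp, <- (Rabs_Ropp (q - p)).
  replace (- (Hh a C q - Hh a C p)) with (Hh a C p - Hh a C q) by ring.
  replace (- (q - p)) with (p - q) by ring. apply Hgen; auto. lra.
Qed.

Lemma Hh_incr a b C p q : 0 < a -> adm a b C -> a <= p -> p < q -> q <= b -> Hh a C p < Hh a C q.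
Proof.
  intros Ha Hadm Hp Hpq Hq.
  assert (0 < RInt (kf C) p q).
  { pose proof (RInt_lt (fun _ => 0) (kf C) p q Hpq) as H.
    rewrite RInt_const in H. unfold scal in H; simpl in H; unfold mult in H; simpl in H.
    rewrite Rmult_0_r in H. apply H.
    intros x Hx. apply kf_cont. lra. apply Hadm; lra.
    intros x Hx. apply continuous_const.
    intros x Hx. apply kf_pos. lra. apply Hadm; lra. }
  rewrite <- (Hh_diff a b C p q) in H by (auto; lra). lra.
Qed.

Lemma Hh_der a b C w : 0 < a -> adm a b C -> a < w < b -> is_derive (Hh a C) w (kf C w).
Proof.
  intros Ha Hadm Hw. unfold Hh. apply (is_derive_RInt (V:=R_CompleteNormedModule) (kf C) (fun w => RInt (kf C) a w) a w).
  - assert (Hm : 0 < Rmin (w - a) (b - w)) by (apply Rmin_glb_lt; lra).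
    exists (mkposreal _ Hm). intros y Hy0.
    assert (Hy : Rabs (y - w) < Rmin (w - a) (b - w)) by exact Hy0.
    assert (Rmin (w - a) (b - w) <= w - a) by apply Rmin_l.
    assert (Rmin (w - a) (b - w) <= b - w) by apply Rmin_r.
    apply Rabs_def2 in Hy.
    apply RInt_correct. apply (kf_ex a b); auto; lra.
  - apply kf_cont. lra. apply Hadm; lra.
Qed.

Lemma T_decr a b C1 C2 : 0 < a -> a < b -> adm a b C1 -> C1 < C2 -> Hh a C2 b < Hh a C1 b.
Proof.
  intros Ha Hab Hadm H12.
  assert (Hadm2 : adm a b C2) by (intros w Hw; specialize (Hadm w Hw); lra).
  unfold Hh. apply RInt_lt; auto.
  intros x Hx. apply kf_cont. lra. apply Hadm; lra.
  intros x Hx. apply kf_cont. lra. apply Hadm2; lra.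
  intros x Hx. unfold kf. specialize (Hadm x ltac:(lra)). assert (0 < N x) by (apply hNp; lra).
  unfold Rdiv. apply Rmult_lt_compat_l; auto. apply Rinv_lt_contravar. nra. lra.
Qed.


Lemma zero_small z : (forall e, 0 < e -> Rabs z < e) -> z = 0.
Proof.
  intros H. destruct (Req_dec z 0) as [h|h]; auto. exfalso.
  specialize (H (Rabs z) (Rabs_pos_lt z h)). lra.
Qed.

Lemma near_end l (u : R -> R) e xe : 0 < l -> ctn l u -> (xe = -l \/ xe = l) -> 0 < e ->
  exists y, -l < y < l /\ Rabs (y - xe) < e /\ Rabs (u y - u xe) < e.
Proof.
  intros Hl Hc Hxe He.
  destruct (Hc xe ltac:(destruct Hxe; subst; lra) e He) as [d [Hd Hd']].
  set (m := Rmin (Rmin d l) e).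
  assert (m <= Rmin d l) by apply Rmin_l. assert (m <= e) by apply Rmin_r.
  assert (Rmin d l <= d) by apply Rmin_l. assert (Rmin d l <= l) by apply Rmin_r.
  assert (0 < m) by (apply Rmin_glb_lt; [apply Rmin_glb_lt|]; lra).
  destruct Hxe as [E|E]; subst xe.
  - exists (-l + m / 2). assert (Rabs (-l + m / 2 - - l) = m / 2) by (rewrite Rabs_right; lra).
    split. lra. split. lra. apply Hd'. lra. lra.
  - exists (l - m / 2). assert (Rabs (l - m / 2 - l) = m / 2) by (rewrite Rabs_left; lra).
    split. lra. split. lra. apply Hd'. lra. lra.
Qed.

Lemma H_of_u l C u a b : 0 < l -> sol l (Fc G N C) u -> u (-l) = a -> u l = b -> a < b ->
  adm a b C /\ (forall x, -l < x < l -> a < u x < b /\ Hh a C (u x) = x + l) /\ Hh a C b = 2 * l.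
Proof.
  intros Hl Hs Ha Hb Hab. pose proof Hs as [Hp [Hc Hd]].
  destruct (C_above l C u a b Hl Hs Ha Hb Hab) as [Hpos Hadm].
  assert (Ha0 : 0 < a) by (rewrite <- Ha; apply Hp; lra).
  assert (Hin : forall x, -l < x < l -> a < u x < b).
  { intros x Hx. pose proof (incr_ends l u (fun t => Fc G N C (u t)) Hc Hd Hpos x Hx). lra. }
  destruct (kf_bound a b C Ha0 ltac:(lra) Hadm) as [Km [HKm HK]].
  set (phi := fun t => Hh a C (u t) - t).
  assert (Hphi : forall x, -l < x < l -> is_derive phi x 0).
  { intros x Hx. unfold phi.
    assert (H1 : is_derive (fun t => Hh a C (u t)) x (scal (Fc G N C (u x)) (kf C (u x)))).
    { apply (is_derive_comp (Hh a C) u). apply (Hh_der a b); auto. apply Hd; auto. }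
    assert (E : scal (Fc G N C (u x)) (kf C (u x)) = 1).
    { unfold scal; simpl; unfold mult; simpl. unfold Fc, kf.
      assert (0 < N (u x)) by (apply hNp; apply Hp; lra). assert (G (u x) < C) by (apply Hadm; specialize (Hin x Hx); lra).
      field. lra. }
    rewrite E in H1.
    apply (is_derive_ext (fun t => minus (Hh a C (u t)) t)). reflexivity.
    replace 0 with (minus 1 1) by (unfold minus, plus, opp; simpl; ring).
    apply (is_derive_minus (K:=R_AbsRing) (V:=R_NormedModule)); auto.
    apply (is_derive_id (K:=R_AbsRing)). }
  assert (Hconst : forall x, -l < x < l -> phi x = phi 0).
  { intros x Hx. destruct (Rle_dec 0 x).
    - apply (const_int phi (fun _ => 0) (-l) l 0 x); auto; lra.
    - symmetry. apply (const_int phi (fun _ => 0) (-l) l x 0); auto; lra. }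
  assert (Hlim : forall xe, (xe = -l \/ xe = l) -> phi 0 = Hh a C (u xe) - xe).
  { intros xe Hxe. apply Rminus_diag_uniq. apply zero_small. intros e He.
    set (e' := e / (2 * (Km + 1))).
    assert (He' : 0 < e') by (unfold e'; apply Rdiv_lt_0_compat; lra).
    destruct (near_end l u e' xe Hl Hc Hxe He') as [y [Hy [Hy1 Hy2]]].
    rewrite <- (Hconst y Hy). unfold phi.
    assert (Hux : a <= u xe <= b) by (destruct Hxe; subst; lra).
    pose proof (Hh_lip a b C Km (u xe) (u y) Ha0 Hadm HK Hux ltac:(specialize (Hin y Hy); lra)) as HL.
    replace (Hh a C (u y) - y - (Hh a C (u xe) - xe)) with ((Hh a C (u y) - Hh a C (u xe)) - (y - xe)) by ring.
    eapply Rle_lt_trans. apply Rabs_triang. rewrite Rabs_Ropp.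
    assert (Km * Rabs (u y - u xe) <= Km * e') by (apply Rmult_le_compat_l; lra).
    assert (Km * e' + e' < e).
    { unfold e'. replace (Km * (e / (2 * (Km + 1))) + e / (2 * (Km + 1))) with (e / 2) by (field; lra). lra. }
    lra. }
  assert (HHa : Hh a C a = 0) by (unfold Hh; apply (RInt_point (V:=R_CompleteNormedModule))).
  pose proof (Hlim (-l) (or_introl eq_refl)) as L1. pose proof (Hlim l (or_intror eq_refl)) as L2.
  rewrite Ha, HHa in L1. rewrite Hb in L2.
  split; auto. split.
  - intros x Hx. split; auto. pose proof (Hconst x Hx). unfold phi in *. lra.
  - lra.
Qed.

Lemma uniq_incr l C1 C2 u1 u2 a b : 0 < l -> sol l (Fc G N C1) u1 -> sol l (Fc G N C2) u2 ->
  u1 (-l) = a -> u1 l = b -> u2 (-l) = a -> u2 l = b -> a < b ->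
  forall x, -l <= x <= l -> u1 x = u2 x.
Proof.
  intros Hl Hs1 Hs2 Ha1 Hb1 Ha2 Hb2 Hab.
  destruct (H_of_u l C1 u1 a b Hl Hs1 Ha1 Hb1 Hab) as [Had1 [Hi1 HT1]].
  destruct (H_of_u l C2 u2 a b Hl Hs2 Ha2 Hb2 Hab) as [Had2 [Hi2 HT2]].
  assert (Ha0 : 0 < a) by (rewrite <- Ha1; apply (proj1 Hs1); lra).
  assert (E : C1 = C2).
  { destruct (Rtotal_order C1 C2) as [h|[h|h]]; auto; exfalso.
    - pose proof (T_decr a b C1 C2 Ha0 Hab Had1 h). lra.
    - pose proof (T_decr a b C2 C1 Ha0 Hab Had2 h). lra. }
  subst C2. intros x Hx.
  destruct (Req_dec x (-l)) as [->|h1]. congruence.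
  destruct (Req_dec x l) as [->|h2]. congruence.
  destruct (Hi1 x ltac:(lra)) as [Hr1 He1]. destruct (Hi2 x ltac:(lra)) as [Hr2 He2].
  destruct (Rtotal_order (u1 x) (u2 x)) as [h|[h|h]]; auto; exfalso.
  - pose proof (Hh_incr a b C1 (u1 x) (u2 x) Ha0 Had1 ltac:(lra) h ltac:(lra)). lra.
  - pose proof (Hh_incr a b C1 (u2 x) (u1 x) Ha0 Had1 ltac:(lra) h ltac:(lra)). lra.
Qed.

Lemma uniq_const l C u a : 0 < l -> sol l (Fc G N C) u -> u (-l) = a -> u l = a ->
  forall x, -l <= x <= l -> u x = a.
Proof.
  intros Hl Hs Ha Hb x Hx. pose proof Hs as [Hp [Hc Hd]].
  destruct (Req_dec (Fc G N C (u 0)) 0) as [h|h].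
  - rewrite (sol_equil l C u 0 Hs ltac:(lra) h x Hx).
    rewrite <- (sol_equil l C u 0 Hs ltac:(lra) h (-l) ltac:(lra)). auto.
  - exfalso.
    assert (Hnz : forall y, -l < y < l -> Fc G N C (u y) <> 0).
    { intros y Hy H0. apply h. 
      rewrite (sol_equil l C u y Hs ltac:(lra) H0 0 ltac:(lra)). auto. }
    destruct (Rtotal_order 0 (Fc G N C (u 0))) as [h'|[h'|h']].
    + assert (Hpos : forall y, -l < y < l -> 0 < Fc G N C (u y)).
      { apply (pos_keep (fun t => Fc G N C (u t)) l Hl); auto. intros; apply (Fu_cont l); auto. }
      pose proof (incr_ends l u _ Hc Hd Hpos 0 ltac:(lra)). lra.
    + lra.
    + assert (Hpos : forall y, -l < y < l -> 0 < - Fc G N C (u y)).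
      { apply (pos_keep (fun t => - Fc G N C (u t)) l Hl); auto.
        intros; apply continuity_pt_opp, (Fu_cont l); auto.
        intros y Hy H'. apply (Hnz y Hy). lra. lra. }
      pose proof (incr_ends l (fun t => - u t) _ (ctn_opp l u Hc)
        ltac:(intros; apply deriv_opp_R; auto) Hpos 0 ltac:(lra)). simpl in H. lra.
Qed.


Lemma kdiff_bound C C' M Nmax w : 0 < N w -> N w <= Nmax -> G w <= M -> M < C -> M < C' ->
  Rabs (kf C' w - kf C w) <= Nmax * Rabs (C' - C) / ((C' - M) * (C - M)).
Proof.
  intros HN HNm HG HC HC'. unfold kf.
  replace (N w / (C' - G w) - N w / (C - G w)) with (N w * (C - C') * / ((C' - G w) * (C - G w))) by (field; lra).
  rewrite !Rabs_mult. rewrite Rabs_inv. rewrite (Rabs_right (N w)) by lra.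
  rewrite (Rabs_right ((C' - G w) * (C - G w))) by nra.
  replace (Rabs (C - C')) with (Rabs (C' - C)) by (rewrite <- Rabs_Ropp; f_equal; ring).
  unfold Rdiv. apply Rmult_le_compat. apply Rmult_le_pos; [lra|apply Rabs_pos].
  left; apply Rinv_0_lt_compat; nra.
  apply Rmult_le_compat_r. apply Rabs_pos. auto.
  apply Rinv_le_contravar. nra. apply Rmult_le_compat; lra.
Qed.

Lemma T_cont a b C M Nmax : 0 < a -> a < b -> (forall w, a <= w <= b -> G w <= M) ->
  (forall w, a <= w <= b -> N w <= Nmax) -> 0 < Nmax -> M < C -> continuity_pt (fun C => Hh a C b) C.
Proof.
  intros Ha Hab HM HNm HNmp HC. apply (proj2 (continuity_pt_locally _ _)). intros [e He]. simpl.
  set (D := C - M).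
  set (del := Rmin (D / 2) (e * D ^ 2 / (2 * (b - a) * Nmax + 1))).
  assert (Hd1 : del <= D / 2) by apply Rmin_l.
  assert (Hd2 : del <= e * D ^ 2 / (2 * (b - a) * Nmax + 1)) by apply Rmin_r.
  assert (HD : 0 < D) by (unfold D; lra).
  assert (Hq : 0 < 2 * (b - a) * Nmax + 1) by nra.
  assert (Hdel : 0 < del) by (apply Rmin_glb_lt; [lra| apply Rdiv_lt_0_compat; [apply Rmult_lt_0_compat; [lra|apply pow_lt; lra]|lra]]).
  exists (mkposreal del Hdel). intros C' HC'0.
  assert (HC' : Rabs (C' - C) < del) by exact HC'0.
  assert (HC'M : D / 2 < C' - M) by (apply Rabs_def2 in HC'; unfold D in *; lra).
  assert (Hadm : adm a b C) by (intros w Hw; specialize (HM w Hw); lra).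
  assert (Hadm' : adm a b C') by (intros w Hw; specialize (HM w Hw); lra).
  unfold Hh. rewrite <- (RInt_minus (V:=R_CompleteNormedModule)).
  2: apply (kf_ex a b); auto; lra. 2: apply (kf_ex a b); auto; lra.
  set (Bd := Nmax * Rabs (C' - C) / ((C' - M) * (C - M))).
  eapply Rle_lt_trans. apply (abs_RInt_le_const _ a b Bd). lra.
  apply (ex_RInt_minus (V:=R_CompleteNormedModule)); apply (kf_ex a b); auto; lra.
  intros t Ht. apply kdiff_bound. apply hNp; lra. auto. auto. lra. lra.
  unfold Bd. fold D.
  assert (Bd0 : Nmax * Rabs (C' - C) / ((C' - M) * D) <= Nmax * Rabs (C' - C) / ((D / 2) * D)).
  { unfold Rdiv. apply Rmult_le_compat_l. apply Rmult_le_pos. lra. apply Rabs_pos.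
    apply Rinv_le_contravar. nra. apply Rmult_le_compat_r; lra. }
  apply Rle_lt_trans with ((b - a) * (Nmax * Rabs (C' - C) / (D / 2 * D))).
  apply Rmult_le_compat_l; lra.
  replace ((b - a) * (Nmax * Rabs (C' - C) / (D / 2 * D))) with (2 * (b - a) * Nmax * Rabs (C' - C) / D ^ 2) by (field; lra).
  apply Rle_lt_trans with (2 * (b - a) * Nmax * (e * D ^ 2 / (2 * (b - a) * Nmax + 1)) / D ^ 2).
  { unfold Rdiv. apply Rmult_le_compat_r. left; apply Rinv_0_lt_compat; nra.
    apply Rmult_le_compat_l. nra. lra. }
  replace (2 * (b - a) * Nmax * (e * D ^ 2 / (2 * (b - a) * Nmax + 1)) / D ^ 2) with
    (e * (2 * (b - a) * Nmax / (2 * (b - a) * Nmax + 1))) by (field; lra).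
  assert (2 * (b - a) * Nmax / (2 * (b - a) * Nmax + 1) < 1).
  { apply (Rmult_lt_reg_r (2 * (b - a) * Nmax + 1)); auto. unfold Rdiv. rewrite Rmult_assoc, Rinv_l by lra. lra. }
  nra.
Qed.


Lemma T_upper a b C M Nmax : 0 < a -> a < b -> (forall w, a <= w <= b -> G w <= M) ->
  (forall w, a <= w <= b -> N w <= Nmax) -> M < C -> Hh a C b <= (b - a) * (Nmax / (C - M)).
Proof.
  intros Ha Hab HM HNm HC.
  assert (Hadm : adm a b C) by (intros w Hw; specialize (HM w Hw); lra).
  eapply Rle_trans. apply Rle_abs. unfold Hh. apply abs_RInt_le_const. lra.
  apply (kf_ex a b); auto; lra.
  intros t Ht. rewrite Rabs_right. 2: left; apply kf_pos; [lra|apply Hadm; lra].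
  unfold kf. specialize (HM t Ht). assert (0 < N t) by (apply hNp; lra). specialize (HNm t Ht).
  unfold Rdiv. apply Rmult_le_compat; try lra. left; apply Rinv_0_lt_compat; lra.
  apply Rinv_le_contravar; lra.
Qed.

Lemma int_lower a b C p q (g : R -> R) V : 0 < a -> adm a b C -> a <= p -> p < q -> q <= b ->
  is_RInt g p q V -> (forall y, p < y < q -> g y <= kf C y) -> V <= Hh a C b.
Proof.
  intros Ha Hadm Hp Hpq Hq Hg Hle.
  assert (V <= RInt (kf C) p q).
  { rewrite <- (is_RInt_unique g p q V Hg). apply RInt_le. lra. exists V; auto.
    apply (kf_ex a b); auto; lra. intros; apply Hle; auto. }
  rewrite <- (Hh_diff a b C p q) in H by (auto; lra).
  assert (Hh a C a <= Hh a C p).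
  { destruct (Req_dec a p) as [->|h]. lra. left. apply (Hh_incr a b); auto; lra. }
  assert (Hh a C q <= Hh a C b).
  { destruct (Req_dec q b) as [->|h]. lra. left. apply (Hh_incr a b); auto; lra. }
  assert (Hh a C a = 0) by (unfold Hh; apply (RInt_point (V:=R_CompleteNormedModule))).
  lra.
Qed.

Lemma T_lower a b M w0 Nmin l : 0 < a -> a < b -> 0 < l -> a <= w0 <= b -> G w0 = M ->
  (forall w, a <= w <= b -> G w <= M) -> 0 < Nmin -> (forall w, a <= w <= b -> Nmin <= N w) ->
  exists C, M < C /\ 2 * l < Hh a C b.
Proof.
  intros Ha Hab Hl Hw0 HGw0 HM HNmin HNm.
  assert (Hex : ex_derive (fun y => G y - M) w0).
  { apply exd_minus_R. apply hG; lra. apply (ex_derive_const (K:=R_AbsRing) (V:=R_NormedModule)). }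
  destruct (lip_zero _ w0 Hex ltac:(lra)) as [L0 [dl [Hdl [HL0 HF]]]].
  set (L := L0 + 1).
  assert (HL : 0 < L) by (unfold L; lra).
  assert (HF' : forall y, Rabs (y - w0) < dl -> M - G y <= L * Rabs (y - w0)).
  { intros y Hy. specialize (HF y Hy).
    assert (M - G y <= Rabs (G y - M)) by (rewrite <- Rabs_Ropp; replace (-(G y - M)) with (M - G y) by ring; apply Rle_abs).
    assert (L0 * Rabs (y - w0) <= L * Rabs (y - w0)) by (apply Rmult_le_compat_r; [apply Rabs_pos|unfold L; lra]).
    lra. }
  set (E := 2 * l * L / Nmin + 1).
  assert (HE : 1 < exp E).
  { rewrite <- exp_0. apply exp_increasing. unfold E.
    assert (0 <= 2 * l * L / Nmin) by (apply Rmult_le_pos; [nra| left; apply Rinv_0_lt_compat; lra]). lra. }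
  assert (Hint : exists p q h, a <= p /\ p < q /\ q <= b /\ h = q - p /\ h < dl /\ (p = w0 \/ q = w0)).
  { destruct (Rlt_dec w0 b) as [h|h].
    - set (h0 := Rmin (dl / 2) (b - w0)).
      assert (h0 <= dl / 2) by apply Rmin_l. assert (h0 <= b - w0) by apply Rmin_r.
      assert (0 < h0) by (apply Rmin_glb_lt; lra).
      exists w0, (w0 + h0), h0. split; [lra|]. split; [lra|]. split; [lra|]. split; [ring|]. split; [lra|]. left; reflexivity.
    - set (h0 := Rmin (dl / 2) (b - a)).
      assert (h0 <= dl / 2) by apply Rmin_l. assert (h0 <= b - a) by apply Rmin_r.
      assert (0 < h0) by (apply Rmin_glb_lt; lra).
      exists (w0 - h0), w0, h0. split; [lra|]. split; [lra|]. split; [lra|]. split; [ring|]. split; [lra|]. right; reflexivity. }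
  destruct Hint as [p [q [h [Hp [Hpq [Hq [Hh [Hhd Hw]]]]]]]].
  set (del := L * h / (exp E - 1)).
  assert (Hdel : 0 < del) by (unfold del; apply Rdiv_lt_0_compat; [apply Rmult_lt_0_compat; lra|lra]).
  exists (M + del). split. lra.
  assert (Hadm : adm a b (M + del)) by (intros w Hw'; specialize (HM w Hw'); lra).
  set (V := Nmin * (ln (del + L * h) - ln del) / L).
  assert (HV : 2 * l < V).
  { unfold V. replace (ln (del + L * h) - ln del) with E.
    assert (0 < Nmin / L) by (apply Rdiv_lt_0_compat; lra).
    replace (Nmin * E / L) with (2 * l + Nmin / L) by (unfold E; field; lra). lra.
    rewrite <- ln_div by (try lra; nra).
    replace ((del + L * h) / del) with (exp E). rewrite ln_exp. auto.
    unfold del. field. split; [|lra]. assert (0 < L * h) by (apply Rmult_lt_0_compat; lra). lra. }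
  assert (Hkey : forall y, p < y < q -> M - G y <= L * Rabs (y - w0)).
  { intros y Hy. apply HF'. destruct Hw as [Hw|Hw]; subst.
    rewrite Rabs_right; lra. rewrite Rabs_left; lra. }
  assert (Hlow : forall y D, p < y < q -> 0 < D -> M - G y <= D - del -> Nmin / D <= kf (M + del) y).
  { intros y D Hy HD HD'. unfold kf. specialize (HM y ltac:(lra)). specialize (HNm y ltac:(lra)).
    unfold Rdiv. apply Rmult_le_compat; try lra. left; apply Rinv_0_lt_compat; lra.
    apply Rinv_le_contravar; lra. }
  apply Rlt_le_trans with V; auto.
  destruct Hw as [Hw|Hw].
  - apply (int_lower a b (M + del) p q (fun y => Nmin / (del + L * (y - p))) V); auto; try lra.
    + replace V with (minus (Nmin * ln (del + L * (q - p)) / L) (Nmin * ln (del + L * (p - p)) / L)).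
      apply (is_RInt_derive (fun y => Nmin * ln (del + L * (y - p)) / L)).
      * intros y Hy. rewrite Rmin_left in Hy by lra. rewrite Rmax_right in Hy by lra.
        auto_derive. nra. field. split; nra.
      * intros y Hy. rewrite Rmin_left in Hy by lra. rewrite Rmax_right in Hy by lra.
        apply (ex_derive_continuous (K:=R_AbsRing) (V:=R_NormedModule)). auto_derive. nra.
      * unfold minus, plus, opp; simpl. unfold V. subst h. replace (p - p) with 0 by ring.
        rewrite Rmult_0_r, Rplus_0_r. field. lra.
    + intros y Hy. apply Hlow; auto. nra. specialize (Hkey y Hy). subst p. rewrite Rabs_right in Hkey; lra.
  - apply (int_lower a b (M + del) p q (fun y => Nmin / (del + L * (q - y))) V); auto; try lra.
    + replace V with (minus (- (Nmin * ln (del + L * (q - q)) / L)) (- (Nmin * ln (del + L * (q - p)) / L))).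
      apply (is_RInt_derive (fun y => - (Nmin * ln (del + L * (q - y)) / L))).
      * intros y Hy. rewrite Rmin_left in Hy by lra. rewrite Rmax_right in Hy by lra.
        auto_derive. nra. field. split; nra.
      * intros y Hy. rewrite Rmin_left in Hy by lra. rewrite Rmax_right in Hy by lra.
        apply (ex_derive_continuous (K:=R_AbsRing) (V:=R_NormedModule)). auto_derive. nra.
      * unfold minus, plus, opp; simpl. unfold V. subst h. replace (q - q) with 0 by ring.
        rewrite Rmult_0_r, Rplus_0_r. field. lra.
    + intros y Hy. apply Hlow; auto. nra. specialize (Hkey y Hy). subst q. rewrite Rabs_left in Hkey; lra.
Qed.


Lemma C_exist a b l : 0 < a -> a < b -> 0 < l -> exists C, adm a b C /\ Hh a C b = 2 * l.
Proof.
  intros Ha Hab Hl.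
  destruct (continuity_ab_maj G a b ltac:(lra)) as [w0 [HM Hw0]].
  { intros c Hc. apply exd_cont, hG; lra. }
  destruct (continuity_ab_min N a b ltac:(lra)) as [m0 [HNmin Hm0]].
  { intros c Hc. apply exd_cont, hN; lra. }
  destruct (continuity_ab_maj N a b ltac:(lra)) as [m1 [HNmax Hm1]].
  { intros c Hc. apply exd_cont, hN; lra. }
  set (M := G w0). set (Nmin := N m0). set (Nmax := N m1).
  assert (HNmin0 : 0 < Nmin) by (apply hNp; lra).
  assert (HNmax0 : 0 < Nmax) by (apply hNp; lra).
  destruct (T_lower a b M w0 Nmin l Ha Hab Hl Hw0 eq_refl HM HNmin0 HNmin) as [C1 [HC1 HT1]].
  set (C2 := M + (b - a) * Nmax / l).
  assert (HC2 : M < C2) by (unfold C2; assert (0 < (b - a) * Nmax / l) by (apply Rdiv_lt_0_compat; nra); lra).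
  assert (HT2 : Hh a C2 b < 2 * l).
  { pose proof (T_upper a b C2 M Nmax Ha Hab HM HNmax HC2).
    replace ((b - a) * (Nmax / (C2 - M))) with l in H by (unfold C2; field; nra). lra. }
  assert (Hadm1 : adm a b C1) by (intros w Hw; specialize (HM w Hw); fold M in HM; lra).
  assert (H12 : C1 < C2).
  { destruct (Rtotal_order C1 C2) as [h|[h|h]]; auto; exfalso.
    - subst; lra.
    - assert (Hadm2 : adm a b C2) by (intros w Hw; specialize (HM w Hw); fold M in HM; lra).
      pose proof (T_decr a b C2 C1 Ha Hab Hadm2 h). lra. }
  destruct (IVT_interv (fun C => 2 * l - Hh a C b) C1 C2) as [C [HC HC']].
  - intros c Hc. apply continuity_pt_minus. apply continuity_pt_const. intros p q; reflexivity.
    apply (T_cont a b c M Nmax); auto. lra.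
  - auto.
  - lra.
  - lra.
  - exists C. split. intros w Hw; specialize (HM w Hw); fold M in HM; lra. lra.
Qed.


Definition clamp a b w := Rmax a (Rmin b w).

Lemma clamp_cases a b w : a <= b ->
  (w <= a /\ clamp a b w = a) \/ (a <= w <= b /\ clamp a b w = w) \/ (b <= w /\ clamp a b w = b).
Proof.
  intros Hab. unfold clamp. destruct (Rle_dec w b) as [h|h].
  - rewrite Rmin_right by lra. destruct (Rle_dec w a) as [h'|h'].
    + left. split; auto. apply Rmax_left; lra.
    + right; left. split. lra. apply Rmax_right; lra.
  - rewrite Rmin_left by lra. right; right. split. lra. apply Rmax_right; lra.
Qed.

Lemma clamp_in a b w : a <= b -> a <= clamp a b w <= b.
Proof. intros Hab. destruct (clamp_cases a b w Hab) as [[? ->]|[[? ->]|[? ->]]]; lra. Qed.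

Lemma clamp_id a b w : a <= w <= b -> clamp a b w = w.
Proof. intros Hw. destruct (clamp_cases a b w ltac:(lra)) as [[? ->]|[[? ->]|[? ->]]]; lra. Qed.

Lemma clamp_mono a b w w' : a <= b -> w <= w' -> clamp a b w <= clamp a b w' /\ w - clamp a b w <= w' - clamp a b w'.
Proof.
  intros Hab Hw. destruct (clamp_cases a b w Hab) as [[? ->]|[[? ->]|[? ->]]];
  destruct (clamp_cases a b w' Hab) as [[? ->]|[[? ->]|[? ->]]]; lra.
Qed.

Lemma clamp_lip a b w w' : a <= b -> Rabs (clamp a b w' - clamp a b w) <= Rabs (w' - w).
Proof.
  intros Hab.
  assert (H : forall p q, p <= q -> Rabs (clamp a b q - clamp a b p) <= Rabs (q - p)).
  { intros p q Hpq. destruct (clamp_mono a b p q Hab Hpq).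
    rewrite !Rabs_right by lra. lra. }
  destruct (Rle_dec w w'). apply H; lra.
  rewrite <- Rabs_Ropp, <- (Rabs_Ropp (w' - w)).
  replace (- (clamp a b w' - clamp a b w)) with (clamp a b w - clamp a b w') by ring.
  replace (- (w' - w)) with (w - w') by ring. apply H; lra.
Qed.

Definition Hx a b C l w := Hh a C (clamp a b w) - l + (w - clamp a b w).

Lemma Hx_incr a b C l w w' : 0 < a -> a < b -> adm a b C -> w < w' -> Hx a b C l w < Hx a b C l w'.
Proof.
  intros Ha Hab Hadm Hw. unfold Hx.
  pose proof (clamp_in a b w ltac:(lra)) as H1. pose proof (clamp_in a b w' ltac:(lra)) as H1'.
  destruct (clamp_mono a b w w' ltac:(lra) ltac:(lra)) as [H4 H5].
  destruct (Req_dec (clamp a b w) (clamp a b w')) as [e|e].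
  - rewrite e. lra.
  - pose proof (Hh_incr a b C (clamp a b w) (clamp a b w') Ha Hadm ltac:(lra) ltac:(lra) ltac:(lra)). lra.
Qed.

Lemma Hx_eq a b C l w : a <= b -> a <= w <= b -> Hx a b C l w = Hh a C w - l.
Proof.
  intros Hab Hw. unfold Hx. rewrite clamp_id by auto. ring.
Qed.

Lemma Hx_cont a b C l w : 0 < a -> a < b -> adm a b C -> continuity_pt (Hx a b C l) w.
Proof.
  intros Ha Hab Hadm. destruct (kf_bound a b C Ha ltac:(lra) Hadm) as [Km [HKm HK]].
  apply (proj2 (continuity_pt_locally _ _)). intros [e He]. simpl.
  assert (Hd : 0 < e / (Km + 2)) by (apply Rdiv_lt_0_compat; lra).
  exists (mkposreal _ Hd). intros w' Hw'0.
  assert (Hw' : Rabs (w' - w) < e / (Km + 2)) by exact Hw'0.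
  pose proof (clamp_in a b w ltac:(lra)) as H1. pose proof (clamp_in a b w' ltac:(lra)) as H1'.
  pose proof (clamp_lip a b w w' ltac:(lra)) as H4.
  unfold Hx.
  pose proof (Hh_lip a b C Km (clamp a b w) (clamp a b w') Ha Hadm HK H1 H1') as HL.
  replace (Hh a C (clamp a b w') - l + (w' - clamp a b w') - (Hh a C (clamp a b w) - l + (w - clamp a b w)))
    with ((Hh a C (clamp a b w') - Hh a C (clamp a b w)) + (w' - w) - (clamp a b w' - clamp a b w)) by ring.
  eapply Rle_lt_trans. apply Rabs_triang. rewrite Rabs_Ropp.
  eapply Rle_lt_trans. apply Rplus_le_compat_r. apply Rabs_triang.
  assert (Km * Rabs (clamp a b w' - clamp a b w) <= Km * Rabs (w' - w)) by (apply Rmult_le_compat_l; lra).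
  assert ((Km + 2) * Rabs (w' - w) < e).
  { apply (Rmult_lt_compat_l (Km + 2)) in Hw'. 2: lra.
    replace ((Km + 2) * (e / (Km + 2))) with e in Hw' by (field; lra). lra. }
  lra.
Qed.

Definition uinv a b C l x := epsilon (inhabits 0) (fun w => a - 1 <= w <= b + 1 /\ Hx a b C l w = x).

Lemma uinv_spec a b C l x : 0 < a -> a < b -> 0 < l -> adm a b C -> Hh a C b = 2 * l ->
  -l - 1 <= x <= l + 1 -> a - 1 <= uinv a b C l x <= b + 1 /\ Hx a b C l (uinv a b C l x) = x.
Proof.
  intros Ha Hab Hl Hadm HT Hx0. unfold uinv. apply epsilon_spec.
  assert (HHa : Hh a C a = 0) by (unfold Hh; apply (RInt_point (V:=R_CompleteNormedModule))).
  assert (E1 : Hx a b C l (a - 1) = -l - 1).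
  { unfold Hx.
    assert (clamp a b (a - 1) = a) by (destruct (clamp_cases a b (a - 1) ltac:(lra)) as [[? ->]|[[? ->]|[? ->]]]; lra).
    rewrite H. rewrite HHa. ring. }
  assert (E2 : Hx a b C l (b + 1) = l + 1).
  { unfold Hx. assert (clamp a b (b + 1) = b) by (destruct (clamp_cases a b (b + 1) ltac:(lra)) as [[? ->]|[[? ->]|[? ->]]]; lra).
    rewrite H, HT. ring. }
  destruct (Req_dec x (-l - 1)) as [e|e]. exists (a - 1). split; lra.
  destruct (Req_dec x (l + 1)) as [e'|e']. exists (b + 1). split; lra.
  destruct (IVT_interv (fun w => Hx a b C l w - x) (a - 1) (b + 1)) as [z [Hz Hz']].
  - intros y Hy. apply continuity_pt_minus. apply Hx_cont; auto. apply continuity_pt_const. intros p q; reflexivity.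
  - lra.
  - lra.
  - lra.
  - exists z. split; auto. lra.
Qed.

Lemma uinv_range a b C l x : 0 < a -> a < b -> 0 < l -> adm a b C -> Hh a C b = 2 * l ->
  -l <= x <= l -> a <= uinv a b C l x <= b /\ (-l < x < l -> a < uinv a b C l x < b).
Proof.
  intros Ha Hab Hl Hadm HT Hx0.
  destruct (uinv_spec a b C l x Ha Hab Hl Hadm HT ltac:(lra)) as [H1 H2].
  set (w := uinv a b C l x) in *.
  assert (HHa : Hh a C a = 0) by (unfold Hh; apply (RInt_point (V:=R_CompleteNormedModule))).
  assert (Ea : Hx a b C l a = -l) by (rewrite Hx_eq by lra; lra).
  assert (Eb : Hx a b C l b = l) by (rewrite Hx_eq by lra; lra).
  assert (Hlo : -l < x -> a < w).
  { intros h. destruct (Rle_dec w a) as [h'|h']; [|lra]. exfalso.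
    destruct (Req_dec w a) as [e|e]. rewrite e in H2. lra.
    pose proof (Hx_incr a b C l w a Ha Hab Hadm ltac:(lra)). lra. }
  assert (Hhi : x < l -> w < b).
  { intros h. destruct (Rle_dec b w) as [h'|h']; [|lra]. exfalso.
    destruct (Req_dec w b) as [e|e]. rewrite e in H2. lra.
    pose proof (Hx_incr a b C l b w Ha Hab Hadm ltac:(lra)). lra. }
  assert (Hlo' : a <= w).
  { destruct (Rle_dec a w) as [h|h]; auto. exfalso.
    pose proof (Hx_incr a b C l w a Ha Hab Hadm ltac:(lra)). lra. }
  assert (Hhi' : w <= b).
  { destruct (Rle_dec w b) as [h|h]; auto. exfalso.
    pose proof (Hx_incr a b C l b w Ha Hab Hadm ltac:(lra)). lra. }
  split. lra. intros; split; [apply Hlo|apply Hhi]; lra.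
Qed.


Lemma uinv_cont a b C l x : 0 < a -> a < b -> 0 < l -> adm a b C -> Hh a C b = 2 * l ->
  -l - 1 < x < l + 1 -> continuity_pt (uinv a b C l) x.
Proof.
  intros Ha Hab Hl Hadm HT Hx0.
  assert (HHa : Hh a C a = 0) by (unfold Hh; apply (RInt_point (V:=R_CompleteNormedModule))).
  assert (E1 : Hx a b C l (a - 1) = -l - 1).
  { unfold Hx. assert (clamp a b (a - 1) = a) by (destruct (clamp_cases a b (a - 1) ltac:(lra)) as [[? ->]|[[? ->]|[? ->]]]; lra).
    rewrite H. rewrite HHa. ring. }
  assert (E2 : Hx a b C l (b + 1) = l + 1).
  { unfold Hx. assert (clamp a b (b + 1) = b) by (destruct (clamp_cases a b (b + 1) ltac:(lra)) as [[? ->]|[[? ->]|[? ->]]]; lra).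
    rewrite H, HT. ring. }
  apply (continuity_pt_recip_interv (Hx a b C l) (uinv a b C l) (a - 1) (b + 1)).
  - lra.
  - intros p q Hp Hpq Hq. apply Hx_incr; auto.
  - intros y Hy Hy'. unfold comp, id. apply (uinv_spec a b C l y); auto. lra.
  - intros y Hy Hy'. apply (uinv_spec a b C l y); auto. lra.
  - intros y Hy. apply Hx_cont; auto.
  - lra.
Qed.

Lemma Hx_der a b C l w : 0 < a -> a < b -> adm a b C -> a < w < b -> is_derive (Hx a b C l) w (kf C w).
Proof.
  intros Ha Hab Hadm Hw.
  apply (is_derive_ext_loc (fun w => Hh a C w - l)).
  - assert (Hm : 0 < Rmin (w - a) (b - w)) by (apply Rmin_glb_lt; lra).
    exists (mkposreal _ Hm). intros y Hy0.
    assert (Hy : Rabs (y - w) < Rmin (w - a) (b - w)) by exact Hy0.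
    assert (Rmin (w - a) (b - w) <= w - a) by apply Rmin_l.
    assert (Rmin (w - a) (b - w) <= b - w) by apply Rmin_r.
    apply Rabs_def2 in Hy. rewrite Hx_eq; lra.
  - replace (kf C w) with (minus (kf C w) 0) by (unfold minus, plus, opp; simpl; ring).
    apply (is_derive_minus (K:=R_AbsRing) (V:=R_NormedModule) (Hh a C) (fun _ => l)).
    apply (Hh_der a b); auto. apply (is_derive_const (K:=R_AbsRing) (V:=R_NormedModule)).
Qed.

Lemma uinv_der a b C l x : 0 < a -> a < b -> 0 < l -> adm a b C -> Hh a C b = 2 * l ->
  -l < x < l -> is_derive (uinv a b C l) x (Fc G N C (uinv a b C l x)).
Proof.
  intros Ha Hab Hl Hadm HT Hx0.
  set (g := uinv a b C l). set (f := Hx a b C l).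
  set (lb := (x - l) / 2). set (ub := (x + l) / 2).
  assert (Hr : forall y, -l < y < l -> a < g y < b) by (intros y Hy; apply (uinv_range a b C l y); auto; lra).
  assert (Hfg : forall y, -l <= y <= l -> f (g y) = y) by (intros y Hy; apply (uinv_spec a b C l y); auto; lra).
  assert (Hmono : forall y z, -l <= y -> y < z -> z <= l -> g y < g z).
  { intros y z Hy Hyz Hz. destruct (Rlt_dec (g y) (g z)) as [h|h]; auto. exfalso.
    destruct (Req_dec (g y) (g z)) as [e|e].
    - pose proof (Hfg y ltac:(lra)). pose proof (Hfg z ltac:(lra)). unfold f in *. rewrite e in H. lra.
    - pose proof (Hx_incr a b C l (g z) (g y) Ha Hab Hadm ltac:(lra)).
      pose proof (Hfg y ltac:(lra)). pose proof (Hfg z ltac:(lra)). unfold f in *. lra. }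
  assert (Prf : forall a0, g lb <= a0 <= g ub -> derivable_pt f a0).
  { intros a0 Ha0. apply ex_derive_Reals_0. exists (kf C a0). apply Hx_der; auto.
    pose proof (Hr lb ltac:(unfold lb; lra)). pose proof (Hr ub ltac:(unfold ub; lra)). lra. }
  assert (Prg : g lb <= g x <= g ub).
  { split; left; apply Hmono; unfold lb, ub; lra. }
  assert (Hder : derive_pt f (g x) (Prf (g x) Prg) = kf C (g x)).
  { apply derive_pt_eq_0. apply is_derive_Reals. apply Hx_der; auto. }
  assert (Hk : 0 < kf C (g x)) by (apply kf_pos; [pose proof (Hr x Hx0); lra|apply Hadm; pose proof (Hr x Hx0); lra]).
  pose proof (derivable_pt_lim_recip_interv f g lb ub x Prf) as HH.
  assert (HH2 : derivable_pt_lim g x (1 / derive_pt f (g x) (Prf (g x) Prg))).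
  { apply HH.
    - apply (uinv_cont a b C l x); auto; lra.
    - unfold lb, ub; lra.
    - unfold lb, ub; lra.
    - intros y Hy. unfold comp, id. apply Hfg. unfold lb, ub in Hy; lra.
    - rewrite Hder. lra. }
  rewrite Hder in HH2. apply is_derive_Reals in HH2.
  replace (Fc G N C (g x)) with (1 / kf C (g x)). exact HH2.
  unfold Fc, kf. pose proof (Hr x Hx0). assert (0 < N (g x)) by (apply hNp; lra).
  assert (G (g x) < C) by (apply Hadm; lra). field. lra.
Qed.

Lemma exist_incr l a b : 0 < l -> 0 < a -> a < b ->
  exists C u, sol l (Fc G N C) u /\ u (-l) = a /\ u l = b.
Proof.
  intros Hl Ha Hab. destruct (C_exist a b l Ha Hab Hl) as [C [Hadm HT]].
  exists C, (uinv a b C l).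
  assert (HHa : Hh a C a = 0) by (unfold Hh; apply (RInt_point (V:=R_CompleteNormedModule))).
  assert (Hinj : forall w w', a - 1 <= w <= b + 1 -> a - 1 <= w' <= b + 1 -> Hx a b C l w = Hx a b C l w' -> w = w').
  { intros w w' _ _ E. destruct (Rtotal_order w w') as [h|[h|h]]; auto.
    pose proof (Hx_incr a b C l w w' Ha Hab Hadm h); lra.
    pose proof (Hx_incr a b C l w' w Ha Hab Hadm h); lra. }
  split; [split; [|split]|split].
  - intros x Hx0. pose proof (uinv_range a b C l x Ha Hab Hl Hadm HT Hx0). lra.
  - intros x Hx0 e He. pose proof (uinv_cont a b C l x Ha Hab Hl Hadm HT ltac:(lra)) as Hc.
    destruct (proj1 (continuity_pt_locally _ _) Hc (mkposreal e He)) as [d Hd].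
    exists d. split. apply cond_pos. intros y Hy Hyx. apply (Hd y). exact Hyx.
  - intros x Hx0. apply uinv_der; auto.
  - destruct (uinv_spec a b C l (-l) Ha Hab Hl Hadm HT ltac:(lra)) as [H1 H2].
    apply Hinj; auto. lra. rewrite H2, Hx_eq by lra. lra.
  - destruct (uinv_spec a b C l l Ha Hab Hl Hadm HT ltac:(lra)) as [H1 H2].
    apply Hinj; auto. lra. rewrite H2, Hx_eq by lra. lra.
Qed.

End Core.

Lemma sol_ext l (F F' u : R -> R) : (forall w, F w = F' w) -> sol l F u -> sol l F' u.
Proof. intros HF [H1 [H2 H3]]. split; [|split]; auto. intros x Hx. rewrite <- HF. auto. Qed.

Lemma sol_refl l (G N : R -> R) C u : sol l (Fc G N C) u -> sol l (Fc (fun w => - G w) N (- C)) (fun t => u (- t)).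
Proof.
  intros [H1 [H2 H3]]. split; [|split].
  - intros x Hx. apply H1. lra.
  - apply ctn_refl; auto.
  - intros x Hx. replace (Fc (fun w => - G w) N (- C) (u (- x))) with (- Fc G N C (u (- x))).
    apply deriv_refl. apply H3. lra. unfold Fc, Rdiv. ring.
Qed.

Lemma exd_opp_R (f : R -> R) x : ex_derive f x -> ex_derive (fun y => - f y) x.
Proof. intros [d H]. exists (- d). apply deriv_opp_R. auto. Qed.

Lemma core_exist (G N : R -> R) l a b : (forall w, 0 < w -> ex_derive G w) -> (forall w, 0 < w -> ex_derive N w) ->
  (forall w, 0 < w -> 0 < N w) -> 0 < l -> 0 < a -> 0 < b ->
  exists C u, sol l (Fc G N C) u /\ u (-l) = a /\ u l = b.
Proof.
  intros hG hN hNp Hl Ha Hb. destruct (Rtotal_order a b) as [h|[h|h]].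
  - apply exist_incr; auto.
  - subst b. exists (G a), (fun _ => a). split; [|split]; auto. split; [|split].
    + intros; auto.
    + intros x Hx e He. exists 1. split. lra. intros. rewrite Rminus_diag, Rabs_R0. auto.
    + intros x Hx. replace (Fc G N (G a) a) with 0.
      apply (is_derive_const (K:=R_AbsRing) (V:=R_NormedModule)). unfold Fc. unfold Rdiv. ring.
  - destruct (exist_incr (fun w => - G w) N (fun w Hw => exd_opp_R G w (hG w Hw)) hN hNp l b a Hl Hb h)
      as [C [u [Hs [H1 H2]]]].
    exists (- C), (fun t => u (- t)). split; [|split].
    + apply (sol_ext l (Fc (fun w => - - G w) N (- C))). intros w. unfold Fc. f_equal. ring.
      apply sol_refl; auto.
    + rewrite Ropp_involutive. auto.
    + auto.
Qed.

Lemma core_unique (G N : R -> R) l a b C1 C2 u1 u2 : (forall w, 0 < w -> ex_derive G w) -> (forall w, 0 < w -> ex_derive N w) ->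
  (forall w, 0 < w -> 0 < N w) -> 0 < l ->
  sol l (Fc G N C1) u1 -> sol l (Fc G N C2) u2 ->
  u1 (-l) = a -> u1 l = b -> u2 (-l) = a -> u2 l = b ->
  forall x, -l <= x <= l -> u1 x = u2 x.
Proof.
  intros hG hN hNp Hl Hs1 Hs2 Ha1 Hb1 Ha2 Hb2 x Hx. destruct (Rtotal_order a b) as [h|[h|h]].
  - apply (uniq_incr G N hG hN hNp l C1 C2 u1 u2 a b); auto.
  - rewrite <- h in Hb1, Hb2. rewrite (uniq_const G N hG hN hNp l C1 u1 a); auto.
    rewrite (uniq_const G N hG hN hNp l C2 u2 a); auto.
  - pose proof (uniq_incr (fun w => - G w) N (fun w Hw => exd_opp_R G w (hG w Hw)) hN hNp l (- C1) (- C2)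
      (fun t => u1 (- t)) (fun t => u2 (- t)) b a Hl (sol_refl l G N C1 u1 Hs1) (sol_refl l G N C2 u2 Hs2))
      as HH.
    simpl in HH. rewrite !Ropp_involutive in HH.
    specialize (HH Hb1 Ha1 Hb2 Ha2 h (- x) ltac:(lra)). rewrite Ropp_involutive in HH. auto.
Qed.

Lemma v_const l (v : R -> R) : 0 < l -> ctn l v -> (forall x, -l < x < l -> is_derive v x 0) ->
  forall x, -l <= x <= l -> v x = v (-l).
Proof.
  intros Hl Hc Hd.
  assert (Hint : forall x, -l < x < l -> v x = v 0).
  { intros x Hx. destruct (Rle_dec 0 x).
    - apply (const_int v (fun _ => 0) (-l) l 0 x); auto; lra.
    - symmetry. apply (const_int v (fun _ => 0) (-l) l x 0); auto; lra. }
  assert (Hend : forall xe, (xe = -l \/ xe = l) -> v xe = v 0).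
  { intros xe Hxe. apply Rminus_diag_uniq. apply zero_small. intros e He.
    destruct (near_end l v e xe Hl Hc Hxe He) as [y [Hy [_ Hy2]]].
    rewrite (Hint y Hy) in Hy2. rewrite <- Rabs_Ropp. replace (- (v xe - v 0)) with (v 0 - v xe) by ring. auto. }
  intros x Hx. rewrite (Hend (-l) (or_introl eq_refl)).
  destruct (Req_dec x (-l)) as [->|h1]. apply Hend; auto.
  destruct (Req_dec x l) as [->|h2]. apply Hend; auto. apply Hint; lra.
Qed.

Lemma loc_interior l x (Q : R -> Prop) : -l < x < l -> (forall y, -l < y < l -> Q y) -> locally x Q.
Proof.
  intros Hx H. assert (Hm : 0 < Rmin (x + l) (l - x)) by (apply Rmin_glb_lt; lra).
  exists (mkposreal _ Hm). intros y Hy0.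
  assert (Hy : Rabs (y - x) < Rmin (x + l) (l - x)) by exact Hy0.
  assert (Rmin (x + l) (l - x) <= x + l) by apply Rmin_l.
  assert (Rmin (x + l) (l - x) <= l - x) by apply Rmin_r.
  apply Rabs_def2 in Hy. apply H. lra.
Qed.

Lemma flux_at eps P nu (u v : R -> R) x vm Du : 0 < u x -> is_derive u x Du ->
  locally x (fun y => v y = vm) -> v x = vm ->
  flux eps P nu u v x = (vm ^ 2 / u x + P (u x)) + (eps * vm * nu (u x) / u x ^ 2) * Du.
Proof.
  intros Hu HD Hloc Hvx. unfold flux.
  assert (E : Derive (fun y => v y / u y) x = (0 * u x - vm * Du) / u x ^ 2).
  { transitivity (Derive (fun y => vm / u y) x).
    apply Derive_ext_loc. apply (filter_imp (fun y => v y = vm)); auto. intros y ->. reflexivity.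
    apply is_derive_unique. apply (is_derive_div (fun _ => vm) u x 0 Du).
    apply (is_derive_const (K:=R_AbsRing) (V:=R_NormedModule)). auto. lra. }
  rewrite E. rewrite Hvx. field. lra.
Qed.

Theorem theorem1p2 (l eps vm um up : R) (P nu : R -> R)
  (hl : 0 < l) (heps : 0 < eps) (hvm : 0 < vm) (hum : 0 < um) (hup : 0 < up)
  (* P in C^2(R^+) *)
  (hP0 : P 0 = 0)
  (hPc0 : filterlim P (at_right 0) (locally 0))
  (hPd : forall u, 0 < u -> ex_derive P u)
  (hPdd : forall u, 0 < u -> ex_derive (Derive P) u)
  (hPc2 : forall u, 0 < u -> continuous (Derive_n P 2) u)
  (hPinf : is_lim P p_infty p_infty)
  (hP1 : forall u, 0 < u -> 0 < Derive P u)
  (hP2 : forall u, 0 < u -> 0 < Derive_n P 2 u)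
  (* nu in C^1(R^+), nu > 0 *)
  (hnud : forall u, 0 < u -> ex_derive nu u)
  (hnuc : forall u, 0 < u -> continuous (Derive nu) u)
  (hnu : forall u, 0 < u -> 0 < nu u)
  (* Rankine-Hugoniot and entropy conditions, v_* := v_- *)
  (hRH : vm ^ 2 * (up - um) = um * up * (P up - P um))
  (hent : (vm ^ 3 / (2 * up ^ 2) + vm * fprime P up)
          - (vm ^ 3 / (2 * um ^ 2) + vm * fprime P um) <= 0) :
  exists u v : R -> R,
    stationary_solution l eps P nu um up vm u v /\
    forall u' v' : R -> R,
      stationary_solution l eps P nu um up vm u' v' ->
      forall x, -l <= x <= l -> u' x = u x /\ v' x = v x.
Proof.
  set (G := fun w => vm ^ 2 / w + P w).
  set (N := fun w => eps * vm * nu w / w ^ 2).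
  assert (hG : forall w, 0 < w -> ex_derive G w).
  { intros w Hw. unfold G. auto_derive. split; [lra|split; [apply hPd; auto|exact I]]. }
  assert (hN : forall w, 0 < w -> ex_derive N w).
  { intros w Hw. unfold N. auto_derive. split; [apply hnud; auto|split; [|exact I]].
    apply Rgt_not_eq. apply Rmult_lt_0_compat; lra. }
  assert (hNp : forall w, 0 < w -> 0 < N w).
  { intros w Hw. unfold N. specialize (hnu w Hw). apply Rdiv_lt_0_compat.
    apply Rmult_lt_0_compat; [nra|auto]. apply pow_lt; auto. }
  assert (Hto : forall u v, stationary_solution l eps P nu um up vm u v ->
     (forall x, -l <= x <= l -> v x = vm) /\ exists C, sol l (Fc G N C) u).
  { intros u v [Hp [Hc [Hd [Ha [Hb Hv]]]]].
    assert (Hcu : ctn l u) by (apply ctn_of_filterlim; intros x Hx; apply (Hc x Hx)).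
    assert (Hcv : ctn l v) by (apply ctn_of_filterlim; intros x Hx; apply (Hc x Hx)).
    assert (Hv' : forall x, -l <= x <= l -> v x = vm).
    { intros x Hx. rewrite <- Hv. apply (v_const l v hl Hcv); auto. intros y Hy; apply (Hd y Hy). }
    split; auto.
    set (C := flux eps P nu u v 0).
    assert (Hfl : forall x, -l < x < l -> flux eps P nu u v x = C).
    { intros x Hx. unfold C. destruct (Rle_dec 0 x).
      - apply (const_int (flux eps P nu u v) (fun _ => 0) (-l) l 0 x); auto; try lra. intros; apply Hd; auto.
      - symmetry. apply (const_int (flux eps P nu u v) (fun _ => 0) (-l) l x 0); auto; try lra. intros; apply Hd; auto. }
    exists C. split; [|split]; auto.
    intros x Hx. destruct (Hd x Hx) as [Hex _].
    pose proof (Derive_correct u x Hex) as HD.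
    replace (Fc G N C (u x)) with (Derive u x). auto.
    assert (Hux : 0 < u x) by (apply Hp; lra).
    assert (Hloc : locally x (fun y => v y = vm)).
    { apply (loc_interior l x). auto. intros y Hy. apply Hv'. lra. }
    pose proof (flux_at eps P nu u v x vm (Derive u x) Hux HD Hloc (Hv' x ltac:(lra))) as E.
    rewrite Hfl in E by auto. unfold Fc. rewrite E. unfold G, N.
    assert (0 < nu (u x)) by auto. field; repeat split; try (apply Rgt_not_eq; assumption); lra. }
  destruct (core_exist G N l um up hG hN hNp hl hum hup) as [C [u [Hs [Ha Hb]]]].
  exists u, (fun _ => vm). split.
  - destruct Hs as [Hp [Hcu Hdu]]. split; [|split; [|split; [|split; [|split]]]]; auto.
    + intros x Hx. split. apply (filterlim_of_ctn l u Hcu x Hx). apply filterlim_const.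
    + intros x Hx. assert (Hux : 0 < u x) by (apply Hp; lra).
      split; [|split; [|split]].
      * exists (Fc G N C (u x)). auto.
      * apply (ex_derive_ext_loc (fun y => Fc G N C (u y))).
        apply (loc_interior l x). auto. intros y Hy. symmetry. apply is_derive_unique. auto.
        apply (ex_derive_comp (K:=R_AbsRing) (V:=R_NormedModule) (Fc G N C) u x).
        apply (Fc_exd G N hG hN hNp). auto. exists (Fc G N C (u x)). auto.
      * apply (is_derive_const (K:=R_AbsRing) (V:=R_NormedModule)).
      * apply (is_derive_ext_loc (fun _ => C)).
        apply (loc_interior l x). auto. intros y Hy.
        assert (Huy : 0 < u y) by (apply Hp; lra).
        assert (Hf : flux eps P nu u (fun _ => vm) y = C).
        { rewrite (flux_at eps P nu u (fun _ => vm) y vm (Fc G N C (u y)) Huy (Hdu y Hy)).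
          unfold Fc. unfold G, N. assert (0 < nu (u y)) by auto. field; repeat split; try (apply Rgt_not_eq; assumption); lra.
          apply filter_forall. auto. auto. }
        rewrite Hf. reflexivity.
        apply (is_derive_const (K:=R_AbsRing) (V:=R_NormedModule)).
  - intros u' v' Hst x Hx. destruct (Hto u' v' Hst) as [Hv' [C' Hs']].
    destruct Hst as [_ [_ [_ [Ha' [Hb' _]]]]].
    split. apply (core_unique G N l um up C' C u' u hG hN hNp hl Hs' Hs Ha' Hb' Ha Hb x Hx).
    apply Hv'; auto.
Qed.
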